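(* Let $n\ge 5$, $k_1=n-2$, $k_2=k_3=1$, and let $g$ be a left-invariant metric on $\mathrm{SO}(n)$ of form (III) with arbitrary parameters $x_1,x_{12},x_{13},x_{23}>0$. Then its Ricci tensor $r$ at the identity satisfies $r(X,Y)=0$ for all $X\in\mathfrak m_{12}$ and $Y\in\mathfrak m_{13}$.
   Context: Let $n=k_1+k_2+k_3$ with positive integers $k_i$, $\mathfrak{so}(n)$ the Lie algebra of $\mathrm{SO}(n)$, and $B(X,Y)=(n-2)\operatorname{tr}(XY)$ its Killing form. Write $n\times n$ matrices in block form with diagonal blocks of sizes $k_1,k_2,k_3$. Let $\mathfrak m_i=\mathfrak{so}(k_i)$ embedded as the $i$-th diagonal block ($\mathfrak m_i=0$ if $k_i=1$), and for $1\le i<j\le 3$ let $\mathfrak m_{ij}$ be the set of matrices whose only nonzero blocks are an arbitrary $(i,j)$-block $A\in M(k_i,k_j)$ and the $(j,i)$-block $-A^t$. A left-invariant metric of form (III) (used when $k_1=n-2$, $k_2=k_3=1$, so $\mathfrak m_2=\mathfrak m_3=0$) is the one whose value at the identity is $x_1(-B)|_{\mathfrak m_1}+x_{12}(-B)|_{\mathfrak m_{12}}+x_{13}(-B)|_{\mathfrak m_{13}}+x_{23}(-B)|_{\mathfrak m_{23}}$ with the summands mutually orthogonal and all $x$'s positive. (Here $\mathfrak m_{12}$ and $\mathfrak m_{13}$ are equivalent $\mathrm{Ad}(\mathrm{SO}(n-2))$-modules.) The Ricci tensor is that of the Levi-Civita connection, as a bilinear form on $\mathfrak{so}(n)=T_e\mathrm{SO}(n)$.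 *)

(* Defs.v *)
(* so(n) realised as skew-symmetric n x n matrices over a real field. *)
From HB Require Import structures.
From mathcomp Require Import all_boot all_order all_algebra.
Set Implicit Arguments. Unset Strict Implicit. Unset Printing Implicit Defensive.
Import Order.TTheory GRing.Theory Num.Theory.
Local Open Scope ring_scope.

(* Block index (0,1,2 for blocks 1,2,3) of a row/column index i, for
   diagonal blocks of sizes k1, k2, k3 = n - k1 - k2. *)
Definition blk (k1 k2 i : nat) : nat :=
  if (i < k1)%N then 0%N else if (i < k1 + k2)%N then 1%N else 2%N.

(* Projection onto the entries lying in the (a,b) and (b,a) blocks.
   For so_mem X: blockproj a a X is the m_{a} component, and for a <> b,
   blockproj a b X is the m_{ab} component. *)
Definition blockproj (R : nzRingType) (n k1 k2 a b : nat) (X : 'M[R]_n) : 'M[R]_n :=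
  \matrix_(i, j)
    if ((blk k1 k2 i == a) && (blk k1 k2 j == b)) ||
       ((blk k1 k2 i == b) && (blk k1 k2 j == a))
    then X i j else 0.

Definition so_mem (R : nzRingType) (n : nat) (X : 'M[R]_n) : Prop := X^T = - X.

Definition lie (R : nzRingType) (n : nat) (X Y : 'M[R]_n) : 'M[R]_n :=
  X *m Y - Y *m X.

Definition killing (R : nzRingType) (n : nat) (X Y : 'M[R]_n) : R :=
  (n - 2)%N%:R * \tr (X *m Y).

Definition metricIII (R : nzRingType) (n : nat) (x1 x12 x13 x23 : R)
    (X Y : 'M[R]_n) : R :=
  let k1 := (n - 2)%N in
  let P a b (Z : 'M[R]_n) := blockproj k1 1 a b Z in
    x1  * - killing (P 0 0 X)%N (P 0 0 Y)%N
  + x12 * - killing (P 0 1 X)%N (P 0 1 Y)%N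
  + x13 * - killing (P 0 2 X)%N (P 0 2 Y)%N
  + x23 * - killing (P 1 2 X)%N (P 1 2 Y)%N.

(* nabla is the Levi-Civita connection of the left-invariant metric g
   (on left-invariant fields, identified with so(n)): it maps so(n) x so(n)
   to so(n) and satisfies the Koszul formula. *)
Definition is_levi_civita (R : nzRingType) (n : nat)
    (g : 'M[R]_n -> 'M[R]_n -> R) (nabla : 'M[R]_n -> 'M[R]_n -> 'M[R]_n) : Prop :=
  forall X Y, so_mem X -> so_mem Y ->
    so_mem (nabla X Y) /\
    forall Z, so_mem Z ->
      2%:R * g (nabla X Y) Z = g (lie X Y) Z - g (lie Y Z) X + g (lie Z X) Y.

Definition curv (R : nzRingType) (n : nat) (nabla : 'M[R]_n -> 'M[R]_n -> 'M[R]_n)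
    (X Y Z : 'M[R]_n) : 'M[R]_n :=
  nabla X (nabla Y Z) - nabla Y (nabla X Z) - nabla (lie X Y) Z.

(* Basis of so(n): e_ij = E_ij - E_ji, i < j; the e_ij-coordinate of a skew A is A i j. *)
Definition skewbasis (R : nzRingType) (n : nat) (i j : 'I_n) : 'M[R]_n :=
  delta_mx i j - delta_mx j i.

(* Ricci tensor: Ric(X,Y) = trace of the linear map Z |-> R(Z,X)Y on so(n),
   computed in the basis (e_ij)_{i<j}. *)
Definition ricci (R : nzRingType) (n : nat) (nabla : 'M[R]_n -> 'M[R]_n -> 'M[R]_n)
    (X Y : 'M[R]_n) : R :=
  \sum_(i : 'I_n) \sum_(j : 'I_n | (i < j)%N)
     (curv nabla (@skewbasis R n i j) X Y) i j.

(* Main.v *)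
Require Import Defs.
From HB Require Import structures.
From mathcomp Require Import all_boot all_order all_algebra.
From mathcomp Require Import ring lra zify.
Import Order.TTheory GRing.Theory Num.Theory.
Local Open Scope ring_scope.

Section Proof.
Variable R : realFieldType.
Variable n : nat.
Local Notation M := 'M[R]_n.

Definition sg (i : 'I_n) : R := if blk (n-2) 1 i == 2%N then -1 else 1.
Definition phi (A : M) : M := \matrix_(i,j) (sg i * sg j * A i j).

Lemma phiE A i j : phi A i j = sg i * sg j * A i j.
Proof. by rewrite mxE. Qed.

Lemma oppE (S : nzRingType) (A : 'M[S]_n) (i j : 'I_n) : (- A) i j = - A i j.
Proof. by rewrite mxE. Qed.

Lemma sg2 i : sg i * sg i = 1.
Proof. by rewrite /sg; case: ifP => _; rewrite ?mulrNN mulr1. Qed.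

Lemma sgsg i j : sg i * sg j = 1 \/ sg i * sg j = -1.
Proof. rewrite /sg; do 2 case: ifP => _; rewrite ?mulrNN ?mulr1 ?mul1r; by [left|right]. Qed.

Lemma phiK A : phi (phi A) = A.
Proof. apply/matrixP => i j; rewrite !mxE /sg; do 2 case: ifP => _; ring. Qed.

Lemma phiD A B : phi (A + B) = phi A + phi B.
Proof. by apply/matrixP => i j; rewrite !mxE mulrDr. Qed.
Lemma phiN A : phi (- A) = - phi A.
Proof. by apply/matrixP => i j; rewrite !mxE mulrN. Qed.
Lemma phiB A B : phi (A - B) = phi A - phi B.
Proof. by rewrite phiD phiN. Qed.

Lemma phi_so A : so_mem A -> so_mem (phi A).
Proof.
move=> /matrixP HA; apply/matrixP => i j; have := HA i j; rewrite !mxE => ->.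
ring.
Qed.

Lemma phiM A B : phi (A *m B) = phi A *m phi B.
Proof.
apply/matrixP => i j; rewrite !mxE big_distrr /=; apply: eq_bigr => k _.
rewrite !mxE /sg; do 3 case: ifP => _; ring.
Qed.

Lemma phi_lie A B : phi (lie A B) = lie (phi A) (phi B).
Proof. by rewrite /lie phiB !phiM. Qed.

Lemma phi_bp a b A : phi (blockproj (n-2) 1 a b A) = blockproj (n-2) 1 a b (phi A).
Proof. by apply/matrixP => i j; rewrite !mxE; case: ifP; rewrite ?mulr0. Qed.

Lemma tr_phi A : \tr (phi A) = \tr A.
Proof. by rewrite /mxtrace; apply: eq_bigr => i _; rewrite mxE sg2 mul1r. Qed.

Lemma killing_phi A B : killing (phi A) (phi B) = killing A B.
Proof. by rewrite /killing -phiM tr_phi. Qed.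

Variables x1 x12 x13 x23 : R.
Local Notation g := (@metricIII R n x1 x12 x13 x23).

Lemma g_phi A B : g (phi A) (phi B) = g A B.
Proof. by rewrite /metricIII /= -!phi_bp !killing_phi. Qed.
Lemma g_phil A B : g (phi A) B = g A (phi B).
Proof. by have := g_phi A (phi B); rewrite phiK. Qed.
Lemma g_phir A B : g A (phi B) = g (phi A) B.
Proof. by rewrite g_phil. Qed.

Lemma bpB a b (A B : M) : blockproj (n-2) 1 a b (A - B) = blockproj (n-2) 1 a b A - blockproj (n-2) 1 a b B.
Proof. by apply/matrixP => i j; rewrite !mxE; case: ifP; rewrite ?subr0. Qed.

Lemma killingBl (A B C : M) : killing (A - B) C = killing A C - killing B C.
Proof. by rewrite /killing mulmxBl linearB /= mulrBr. Qed.
Lemma killingC (A B : M) : killing A B = killing B A.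
Proof. by rewrite /killing mxtrace_mulC. Qed.

Lemma gBl A B C : g (A - B) C = g A C - g B C.
Proof. rewrite /metricIII /= !bpB !killingBl; ring. Qed.
Lemma gC A B : g A B = g B A.
Proof. by rewrite /metricIII /= !(killingC (blockproj _ _ _ _ B)). Qed.
Lemma gN A C : g (- A) C = - g A C.
Proof.
have g0 : g 0 C = 0 by rewrite -(subrr (0:M)) gBl subrr.
by rewrite -sub0r gBl g0 sub0r.
Qed.
Lemma gNr A C : g C (- A) = - g C A.
Proof. by rewrite gC gN gC. Qed.


Lemma soB (A B : M) : so_mem A -> so_mem B -> so_mem (A - B).
Proof. by rewrite /so_mem => hA hB; rewrite linearB /= hA hB opprB opprK addrC. Qed.
Lemma soN (A : M) : so_mem A -> so_mem (- A).
Proof. by rewrite /so_mem => hA; rewrite linearN /= hA. Qed.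
Lemma so_lie (A B : M) : so_mem A -> so_mem B -> so_mem (lie A B).
Proof.
rewrite /so_mem /lie => hA hB; rewrite linearB /= !trmx_mul hA hB.
by rewrite !mulNmx !mulmxN !opprK opprB.
Qed.
Lemma bp_so a b (A : M) : so_mem A -> so_mem (blockproj (n-2) 1 a b A).
Proof.
move=> /matrixP hA; apply/matrixP => i j; rewrite !mxE.
rewrite (andbC (blk _ _ j == a)) (andbC (blk _ _ j == b)) orbC.
case: ifP => _; last by rewrite oppr0.
by have := hA i j; rewrite !mxE.
Qed.

Definition sq (P : M) : R := \sum_i \sum_j P i j ^+ 2.

Lemma killing_skew (P : M) : so_mem P -> killing P P = - ((n-2)%:R * sq P).
Proof.
move=> /matrixP hP; rewrite /killing /mxtrace /sq -mulrN -sumrN; congr (_ * _).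
apply: eq_bigr => i _; rewrite mxE -sumrN; apply: eq_bigr => j _.
by have := hP i j; rewrite !mxE => ->; rewrite mulrN expr2.
Qed.

Lemma sq_ge0 P : 0 <= sq P.
Proof. by apply: sumr_ge0 => i _; apply: sumr_ge0 => j _; apply: sqr_ge0. Qed.

Lemma sq_eq0 P : sq P = 0 -> forall i j, P i j = 0.
Proof.
move=> h i j.
have h1 := psumr_eq0P (fun i _ => sumr_ge0 _ (fun j _ => sqr_ge0 (P i j))) h.
have := h1 i isT.
move/(psumr_eq0P (fun j _ => sqr_ge0 (P i j)))=> /(_ j isT).
by move/eqP; rewrite sqrf_eq0 => /eqP.
Qed.

Lemma blk_eq (i j : 'I_n) : blk (n-2) 1 i = blk (n-2) 1 j -> blk (n-2) 1 i != 0%N -> i = j.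
Proof.
move: (ltn_ord i) (ltn_ord j); rewrite /blk.
case: (ltnP i (n-2)) => h1; case: (ltnP j (n-2)) => h2 //;
case: (ltnP i (n-2+1)) => h3; case: (ltnP j (n-2+1)) => h4 //= ? ? _ _;
apply/val_inj => /=; lia.
Qed.

Lemma blk_lt3 (i : nat) : (blk (n-2) 1 i < 3)%N.
Proof. by rewrite /blk; case: ifP => // _; case: ifP. Qed.

Hypothesis hn : (2 < n)%N.
Hypotheses (hx1 : 0 < x1) (hx12 : 0 < x12) (hx13 : 0 < x13) (hx23 : 0 < x23).

Lemma g_def (W : M) : so_mem W -> g W W = 0 -> W = 0.
Proof.
move=> hW; rewrite /metricIII /= !killing_skew; try by apply: bp_so.
rewrite !opprK.
have kp : 0 < (n-2)%:R :> R by rewrite ltr0n; lia.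
set s1 := sq (blockproj _ _ 0 0 W); set s2 := sq (blockproj _ _ 0 1 W);
set s3 := sq (blockproj _ _ 0 2 W); set s4 := sq (blockproj _ _ 1 2 W).
have t1 : 0 <= x1 * ((n-2)%:R * s1) by apply: mulr_ge0; [exact: ltW| apply: mulr_ge0; [exact: ltW | exact: sq_ge0]].
have t2 : 0 <= x12 * ((n-2)%:R * s2) by apply: mulr_ge0; [exact: ltW| apply: mulr_ge0; [exact: ltW | exact: sq_ge0]].
have t3 : 0 <= x13 * ((n-2)%:R * s3) by apply: mulr_ge0; [exact: ltW| apply: mulr_ge0; [exact: ltW | exact: sq_ge0]].
have t4 : 0 <= x23 * ((n-2)%:R * s4) by apply: mulr_ge0; [exact: ltW| apply: mulr_ge0; [exact: ltW | exact: sq_ge0]].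
move=> hs.
have z : forall x s : R, 0 < x -> x * ((n-2)%:R * s) = 0 -> s = 0.
  move=> x s hx /eqP; rewrite !mulf_eq0 (gt_eqF hx) (gt_eqF kp) /=; by move/eqP.
have e1 : s1 = 0 by apply: (z x1); [exact: hx1 | lra].
move/sq_eq0: e1 => e1.
have e2 : s2 = 0 by apply: (z x12); [exact: hx12 | lra].
move/sq_eq0: e2 => e2.
have e3 : s3 = 0 by apply: (z x13); [exact: hx13 | lra].
move/sq_eq0: e3 => e3.
have e4 : s4 = 0 by apply: (z x23); [exact: hx23 | lra].
move/sq_eq0: e4 => e4.
apply/matrixP => i j; rewrite mxE.
have diag : forall k, W k k = 0.
  move=> k; move/matrixP: hW => /(_ k k); rewrite !mxE => h; lra.
clear -e1 e2 e3 e4 diag.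
have hi := blk_lt3 i; have hj := blk_lt3 j.
case Hi: (blk (n-2) 1 i) hi => [|[|[|k]]] // _;
case Hj: (blk (n-2) 1 j) hj => [|[|[|l]]] // _.
- by have := e1 i j; rewrite mxE Hi Hj.
- by have := e2 i j; rewrite mxE Hi Hj.
- by have := e3 i j; rewrite mxE Hi Hj.
- by have := e2 i j; rewrite mxE Hi Hj.
- by rewrite (@blk_eq i j) ?Hi ?Hj.
- by have := e4 i j; rewrite mxE Hi Hj.
- by have := e3 i j; rewrite mxE Hi Hj.
- by have := e4 i j; rewrite mxE Hi Hj.
- by rewrite (@blk_eq i j) ?Hi ?Hj.
Qed.


Lemma g_uniq A B : so_mem A -> so_mem B ->
  (forall Z, so_mem Z -> g A Z = g B Z) -> A = B.
Proof.
move=> hA hB h; apply/eqP; rewrite -subr_eq0; apply/eqP; apply: g_def; first exact: soB.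
by rewrite gBl h ?subrr //; exact: soB.
Qed.

Lemma two_neq0 : (2%:R : R) != 0.
Proof. by rewrite pnatr_eq0. Qed.

Lemma lieN1 (A B : M) : lie (-A) B = - lie A B.
Proof. by rewrite /lie mulNmx mulmxN opprK opprB addrC. Qed.
Lemma lieN2 (A B : M) : lie A (-B) = - lie A B.
Proof. by rewrite /lie mulNmx mulmxN opprK opprB addrC. Qed.

Variable nabla : M -> M -> M.
Hypothesis hLC : is_levi_civita g nabla.

Lemma nabla_so X Y : so_mem X -> so_mem Y -> so_mem (nabla X Y).
Proof. by move=> hX hY; case: (hLC _ _ hX hY). Qed.

Ltac so_tac := repeat (first [apply: nabla_so | apply: so_lie | apply: soN | apply: phi_so | apply: soB | assumption]).

Lemma nabla_phi A B : so_mem A -> so_mem B -> nabla (phi A) (phi B) = phi (nabla A B).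
Proof.
move=> hA hB; apply: g_uniq; try by so_tac.
move=> Z hZ; apply: (mulfI two_neq0).
rewrite (hLC _ _ (phi_so _ hA) (phi_so _ hB)).2 // [in RHS]g_phil (hLC _ _ hA hB).2 ?phi_so //.
rewrite -phi_lie !g_phir !phi_lie !phiK.
by [].
exact: phi_so.
Qed.

Lemma nablaN1 A B : so_mem A -> so_mem B -> nabla (-A) B = - nabla A B.
Proof.
move=> hA hB; apply: g_uniq; try by so_tac.
move=> Z hZ; apply: (mulfI two_neq0).
rewrite (hLC _ _ (soN _ hA) hB).2 // gN mulrN (hLC _ _ hA hB).2 //.
rewrite lieN1 lieN2 !gN !gNr; ring.
Qed.

Lemma nablaN2 A B : so_mem A -> so_mem B -> nabla A (-B) = - nabla A B.
Proof.
move=> hA hB; apply: g_uniq; try by so_tac.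
move=> Z hZ; apply: (mulfI two_neq0).
rewrite (hLC _ _ hA (soN _ hB)).2 // gN mulrN (hLC _ _ hA hB).2 //.
rewrite lieN1 lieN2 !gN !gNr; ring.
Qed.


Lemma curvN1 A X Y : so_mem A -> so_mem X -> so_mem Y ->
  curv nabla (-A) X Y = - curv nabla A X Y.
Proof.
move=> hA hX hY; rewrite /curv lieN1.
rewrite (nablaN1 _ _ hA); try by so_tac.
rewrite (nablaN1 _ _ hA hY) (nablaN2 _ _ hX); try by so_tac.
rewrite (nablaN1 _ _ _ hY); try by so_tac.
by rewrite !opprD !opprK.
Qed.

Lemma curvN2 A X Y : so_mem A -> so_mem X -> so_mem Y ->
  curv nabla A X (-Y) = - curv nabla A X Y.
Proof.
move=> hA hX hY; rewrite /curv.
rewrite (nablaN2 _ _ hX hY) (nablaN2 _ _ hA hY) (nablaN2 _ _ hA); try by so_tac.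
rewrite (nablaN2 _ _ hX); try by so_tac.
rewrite (nablaN2 _ _ _ hY); try by so_tac.
by rewrite !opprD !opprK.
Qed.

Lemma curv_phi A X Y : so_mem A -> so_mem X -> so_mem Y ->
  curv nabla (phi A) (phi X) (phi Y) = phi (curv nabla A X Y).
Proof.
move=> hA hX hY; rewrite /curv -phi_lie.
rewrite (nabla_phi _ _ hX hY) (nabla_phi _ _ hA hY) (nabla_phi _ _ _ hY); try by so_tac.
rewrite (nabla_phi _ _ hA) ?(nabla_phi _ _ hX); try by so_tac.
by rewrite !phiB.
Qed.

Lemma so_e (i j : 'I_n) : so_mem (skewbasis R i j).
Proof. by rewrite /so_mem /skewbasis linearB /= !trmx_delta opprB. Qed.

Lemma sg_e (i j k l : 'I_n) : (skewbasis R i j) k l != 0 -> sg k * sg l = sg i * sg j.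
Proof.
rewrite /skewbasis !mxE.
case: (boolP ((k == i) && (l == j))) => [/andP[/eqP-> /eqP->] //|_].
case: (boolP ((k == j) && (l == i))) => [/andP[/eqP-> /eqP->] _|_]; first exact: mulrC.
by rewrite subrr eqxx.
Qed.

Lemma phi_e (i j : 'I_n) : phi (skewbasis R i j) = (sg i * sg j) *: skewbasis R i j.
Proof.
apply/matrixP => k l; have := @sg_e i j k l; rewrite !mxE.
move: (((k == i) && (l == j))%:R - ((k == j) && (l == i))%:R : R) => e h.
have [->|nz] := eqVneq e 0; first by rewrite !mulr0.
by rewrite (h nz).
Qed.

Lemma curvZ (c : R) A X Y : (c = 1 \/ c = -1) -> so_mem A -> so_mem X -> so_mem Y ->
  curv nabla (c *: A) X Y = c *: curv nabla A X Y.
Proof.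
case=> ->; first by rewrite !scale1r.
by move=> *; rewrite !scaleN1r curvN1.
Qed.

Lemma term_phi X Y (i j : 'I_n) : so_mem X -> so_mem Y ->
  curv nabla (skewbasis R i j) (phi X) (phi Y) i j = curv nabla (skewbasis R i j) X Y i j.
Proof.
move=> hX hY.
rewrite -{1}(phiK (skewbasis R i j)) curv_phi //; last by apply/phi_so/so_e.
rewrite phiE phi_e; case: (sgsg i j) => ->; first by rewrite scale1r mul1r.
rewrite scaleN1r curvN1 //; last exact: so_e.
transitivity (-1 * (- (curv nabla (skewbasis R i j) X Y i j))).
  by congr (_ * _); exact: oppE.
by rewrite mulN1r opprK.
Qed.

Lemma ricci_phi X Y : so_mem X -> so_mem Y ->
  ricci nabla (phi X) (phi Y) = ricci nabla X Y.
Proof.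
move=> hX hY; rewrite /ricci; apply: eq_bigr => i _; apply: eq_bigr => j _.
exact: term_phi.
Qed.

Lemma termN X Y (i j : 'I_n) : so_mem X -> so_mem Y ->
  curv nabla (skewbasis R i j) X (-Y) i j = - curv nabla (skewbasis R i j) X Y i j.
Proof.
move=> hX hY; rewrite curvN2 //; last exact: so_e.
exact: oppE.
Qed.

Lemma ricciN X Y : so_mem X -> so_mem Y ->
  ricci nabla X (-Y) = - ricci nabla X Y.
Proof.
move=> hX hY; rewrite /ricci -sumrN; apply: eq_bigr => i _.
rewrite -sumrN; apply: eq_bigr => j _.
exact: termN.
Qed.

Lemma main_sec X Y :
    so_mem X -> X = blockproj (n - 2)%N 1 0 1 X ->
    so_mem Y -> Y = blockproj (n - 2)%N 1 0 2 Y ->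
    ricci nabla X Y = 0.
Proof.
move=> hX eX hY eY.
have pX : phi X = X.
  rewrite eX; apply/matrixP => i j; rewrite !mxE.
  case: ifP => [/orP[/andP[/eqP h1 /eqP h2]|/andP[/eqP h1 /eqP h2]]|_]; last by rewrite mulr0.
  - by rewrite /sg h1 h2 /= !mul1r.
  - by rewrite /sg h1 h2 /= !mul1r.
have pY : phi Y = - Y.
  rewrite eY; apply/matrixP => i j; rewrite !mxE.
  case: ifP => [/orP[/andP[/eqP h1 /eqP h2]|/andP[/eqP h1 /eqP h2]]|_]; last by rewrite mulr0 oppr0.
  - by rewrite /sg h1 h2 /= mul1r mulN1r.
  - by rewrite /sg h1 h2 /= mulr1 mulN1r.
have : ricci nabla X Y = - ricci nabla X Y.
  by rewrite -{1}(ricci_phi _ _ hX hY) pX pY ricciN.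
move=> h; lra.
Qed.

End Proof.

Theorem lemma7p1 (R : realFieldType) (n : nat) (hn : (5 <= n)%N)
    (x1 x12 x13 x23 : R)
    (hx1 : 0 < x1) (hx12 : 0 < x12) (hx13 : 0 < x13) (hx23 : 0 < x23)
    (nabla : 'M[R]_n -> 'M[R]_n -> 'M[R]_n)
    (hLC : is_levi_civita (metricIII x1 x12 x13 x23) nabla) :
  forall X Y : 'M[R]_n,
    so_mem X -> X = blockproj (n - 2)%N 1 0 1 X ->
    so_mem Y -> Y = blockproj (n - 2)%N 1 0 2 Y ->
    ricci nabla X Y = 0.
Proof.
have hn' : (2 < n)%N by apply: leq_trans hn.
move=> X Y; exact: (@main_sec R n x1 x12 x13 x23 hn' hx1 hx12 hx13 hx23 nabla hLC X Y).
Qed.
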